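(* Consider the delay differential system \[ \begin{aligned} \dot T(t)&= s-dT(t)+aT(t)\Big(1-\frac{T(t)+I(t)}{T_{\max}}\Big)-\frac{bT(t)V(t)}{1+\alpha V(t)},\\ \dot I(t)&= \frac{bT(t-\tau)V(t-\tau)}{1+\alpha V(t-\tau)}+aI(t)\Big(1-\frac{T(t)+I(t)}{T_{\max}}\Big)-\mu I(t),\\ \dot V(t)&= pI(t)-cV(t), \end{aligned} \] with positive constants $s,d,a,T_{\max},b,\alpha,\mu,p,c$ and $\tau\ge0$. Let \[ T_0=\frac{T_{\max}}{2a}\Big(a-d+\sqrt{(a-d)^2+\tfrac{4as}{T_{\max}}}\Big),\qquad R_0=\frac{1}{\mu}\Big[\frac{bpT_0}{c}+a\Big(1-\frac{T_0}{T_{\max}}\Big)\Big]. \] If $R_0>1$, then the system has a unique equilibrium $(T_2,I_2,V_2)$ with $T_2>0$, $I_2>0$, $V_2>0$ (an infected equilibrium).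
   Context: Equilibria are constant solutions of the system (they do not depend on $\tau$). $R_0$ is called the basic reproductive number. *)

(* Defs.v *)
From Stdlib Require Import Reals.
Open Scope R_scope.

Record params := mkParams {
  s_ : R; d_ : R; a_ : R; Tmax_ : R; b_ : R; alpha_ : R;
  mu_ : R; p_ : R; c_ : R; tau_ : R }.

Definition params_ok (P : params) : Prop :=
  0 < s_ P /\ 0 < d_ P /\ 0 < a_ P /\ 0 < Tmax_ P /\ 0 < b_ P /\
  0 < alpha_ P /\ 0 < mu_ P /\ 0 < p_ P /\ 0 < c_ P /\ 0 <= tau_ P.

(* Right-hand sides of the DDE, as functions of the current state (T,I,V)
   and the delayed state (Td,Id,Vd) = (T(t-tau), I(t-tau), V(t-tau)). *)
Definition fT (P : params) (T I V : R) : R :=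
  s_ P - d_ P * T + a_ P * T * (1 - (T + I) / Tmax_ P)
  - b_ P * T * V / (1 + alpha_ P * V).

Definition fI (P : params) (T I V Td Vd : R) : R :=
  b_ P * Td * Vd / (1 + alpha_ P * Vd) + a_ P * I * (1 - (T + I) / Tmax_ P)
  - mu_ P * I.

Definition fV (P : params) (I V : R) : R := p_ P * I - c_ P * V.

(* An equilibrium is a constant solution: the state is constant in time,
   so the delayed state equals the current one and all derivatives vanish. *)
Definition is_equilibrium (P : params) (T I V : R) : Prop :=
  fT P T I V = 0 /\ fI P T I V T V = 0 /\ fV P I V = 0.

Definition T0 (P : params) : R :=
  Tmax_ P / (2 * a_ P) *
  (a_ P - d_ P + sqrt ((a_ P - d_ P) ^ 2 + 4 * a_ P * s_ P / Tmax_ P)).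

Definition basicR0 (P : params) : R :=
  / mu_ P * (b_ P * p_ P * T0 P / c_ P + a_ P * (1 - T0 P / Tmax_ P)).

(* Main.v *)
Require Import Defs.
From Stdlib Require Import Reals Lra Psatz Ranalysis5.
From Coquelicot Require Import Coquelicot.
Open Scope R_scope.

Section Aux.
Variables (s d a Tm b k al mu : R).
Hypotheses (hs : 0 < s) (hd : 0 < d) (ha : 0 < a) (hTm : 0 < Tm) (hb : 0 < b)
  (hk : 0 < k) (hal : 0 < al) (hmu : 0 < mu).

Lemma akpos : 0 < al * k. Proof. nra. Qed.
Lemma wpos (y : R) : 0 <= y -> 0 < 1 + al * k * y.
Proof. intros; pose proof akpos; nra. Qed.

Definition Ff (x y : R) := s / x - d + a - a * x / Tm - a * y / Tm - b * k * y / (1 + al * k * y).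
Definition Gf (x y : R) := b * k * x / (1 + al * k * y) + a * (1 - (x + y) / Tm) - mu.

Lemma g_mono (y1 y2 : R) : 0 <= y1 -> y1 <= y2 ->
  b * k * y1 / (1 + al * k * y1) <= b * k * y2 / (1 + al * k * y2).
Proof.
  intros h1 h2.
  assert (w1 : 0 < 1 + al * k * y1) by (apply wpos; lra).
  assert (w2 : 0 < 1 + al * k * y2) by (apply wpos; lra).
  unfold Rdiv. apply Rmult_le_reg_r with ((1 + al*k*y1)*(1 + al*k*y2)).
  nra.
  replace (b * k * y1 * / (1 + al * k * y1) * ((1 + al * k * y1) * (1 + al * k * y2)))
    with (b*k*y1*(1 + al * k * y2)) by (field; lra).
  replace (b * k * y2 * / (1 + al * k * y2) * ((1 + al * k * y1) * (1 + al * k * y2)))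
    with (b*k*y2*(1 + al * k * y1)) by (field; lra).
  assert (0 < b*k) by nra. nra.
Qed.

Lemma F_strict (x1 y1 x2 y2 : R) : 0 < x1 -> 0 <= y1 -> x1 < x2 -> y1 <= y2 ->
  Ff x2 y2 < Ff x1 y1.
Proof.
  intros h1 h2 h3 h4. unfold Ff.
  pose proof (g_mono y1 y2 h2 h4).
  assert (s / x2 < s / x1).
  { unfold Rdiv. apply Rmult_lt_compat_l; auto. apply Rinv_lt_contravar; nra. }
  assert (a * x1 / Tm < a * x2 / Tm).
  { unfold Rdiv. apply Rmult_lt_compat_r. apply Rinv_0_lt_compat; lra. nra. }
  assert (a * y1 / Tm <= a * y2 / Tm).
  { unfold Rdiv. apply Rmult_le_compat_r. left; apply Rinv_0_lt_compat; lra. nra. }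
  lra.
Qed.

Lemma F_strict_y (x y1 y2 : R) : 0 < x -> 0 <= y1 -> y1 < y2 ->
  Ff x y2 < Ff x y1.
Proof.
  intros h1 h2 h4. unfold Ff.
  pose proof (g_mono y1 y2 h2 (Rlt_le _ _ h4)).
  assert (a * y1 / Tm < a * y2 / Tm).
  { unfold Rdiv. apply Rmult_lt_compat_r. apply Rinv_0_lt_compat; lra. nra. }
  lra.
Qed.

Lemma Q_form (x y : R) : 0 < x -> 0 <= y -> Ff x y = 0 -> Gf x y = 0 ->
  b * k * (x + y) / (1 + al * k * y) = s / x + mu - d.
Proof.
  intros h1 h2 hF hG. unfold Ff, Gf in *.
  assert (w : 0 < 1 + al * k * y) by (apply wpos; lra).
  assert (E : a * (1 - (x + y) / Tm) = mu - b * k * x / (1 + al * k * y)) by lra.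
  assert (E2 : s / x - d + a * (1 - (x + y) / Tm) - b * k * y / (1 + al * k * y) = 0).
  { rewrite <- hF. field. lra. }
  rewrite E in E2.
  assert (b * k * (x + y) / (1 + al * k * y) = b * k * x / (1 + al * k * y) + b * k * y / (1 + al * k * y)) by (field; lra).
  lra.
Qed.

Lemma no_lt (x1 y1 x2 y2 : R) : 0 < x1 -> 0 < y1 -> 0 < x2 -> 0 < y2 ->
  Ff x1 y1 = 0 -> Gf x1 y1 = 0 -> Ff x2 y2 = 0 -> Gf x2 y2 = 0 -> x1 < x2 -> False.
Proof.
  intros p1 q1 p2 q2 F1 G1 F2 G2 lt.
  assert (yl : y2 < y1).
  { destruct (Rlt_le_dec y2 y1) as [h|h]; auto.
    pose proof (F_strict x1 y1 x2 y2 p1 (Rlt_le _ _ q1) lt h). lra. }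
  assert (w1 : 0 < 1 + al * k * y1) by (apply wpos; lra).
  assert (w2 : 0 < 1 + al * k * y2) by (apply wpos; lra).
  set (u1 := / (1 + al * k * y1)). set (u2 := / (1 + al * k * y2)).
  assert (u1 < u2). { unfold u1, u2. apply Rinv_lt_contravar. apply Rmult_lt_0_compat; lra. pose proof akpos; nra. }
  assert (0 < u1) by (unfold u1; apply Rinv_0_lt_compat; lra).
  assert (xu : x1 * u1 < x2 * u2) by nra.
  pose proof (Q_form x1 y1 p1 (Rlt_le _ _ q1) F1 G1) as Q1.
  pose proof (Q_form x2 y2 p2 (Rlt_le _ _ q2) F2 G2) as Q2.
  unfold Gf in G1, G2. unfold Rdiv in *. fold u1 u2 in G1, G2, Q1, Q2.
  assert (bk : 0 < b * k) by nra.
  assert (iT : 0 < / Tm) by (apply Rinv_0_lt_compat; lra).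
  assert (N : x1 + y1 < x2 + y2).
  { assert (b * k * x1 * u1 < b * k * x2 * u2).
    { rewrite !Rmult_assoc. apply Rmult_lt_compat_l. lra. apply Rmult_lt_compat_l; lra. }
    assert (a * ((x1 + y1) * / Tm) < a * ((x2 + y2) * / Tm)).
    { assert (e1 : a * (1 - (x1 + y1) * / Tm) = a - a * ((x1 + y1) * / Tm)) by ring.
      assert (e2 : a * (1 - (x2 + y2) * / Tm) = a - a * ((x2 + y2) * / Tm)) by ring.
      lra. }
    apply Rmult_lt_reg_r with (/ Tm); auto. apply Rmult_lt_reg_l with a; auto. }
  assert (s * / x2 < s * / x1).
  { apply Rmult_lt_compat_l; auto. apply Rinv_lt_contravar. apply Rmult_lt_0_compat; lra. lra. }
  assert (b * k * (x1 + y1) * u1 < b * k * (x2 + y2) * u2).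
  { rewrite !Rmult_assoc. apply Rmult_lt_compat_l. lra.
    apply Rmult_lt_compat_l. lra.
    apply Rle_lt_trans with ((x1 + y1) * u2). apply Rmult_le_compat_l; lra.
    apply Rmult_lt_compat_r; lra. }
  lra.
Qed.

Lemma uniq (x1 y1 x2 y2 : R) : 0 < x1 -> 0 < y1 -> 0 < x2 -> 0 < y2 ->
  Ff x1 y1 = 0 -> Gf x1 y1 = 0 -> Ff x2 y2 = 0 -> Gf x2 y2 = 0 -> x1 = x2 /\ y1 = y2.
Proof.
  intros p1 q1 p2 q2 F1 G1 F2 G2.
  assert (x1 = x2).
  { destruct (Rtotal_order x1 x2) as [h|[h|h]]; auto.
    - exfalso; apply (no_lt x1 y1 x2 y2); auto.
    - exfalso; apply (no_lt x2 y2 x1 y1); auto. }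
  subst x2. split; auto.
  destruct (Rtotal_order y1 y2) as [h|[h|h]]; auto.
  - pose proof (F_strict_y x1 y1 y2 p1 (Rlt_le _ _ q1) h). lra.
  - pose proof (F_strict_y x1 y2 y1 p1 (Rlt_le _ _ q2) h). lra.
Qed.


Definition Bf (y : R) := d - a + a * y / Tm + b * k * y / (1 + al * k * y).
Definition Xf (y : R) := (- Bf y + sqrt (Bf y ^ 2 + 4 * (a / Tm) * s)) / (2 * (a / Tm)).

Lemma A_pos : 0 < a / Tm.
Proof. unfold Rdiv; apply Rmult_lt_0_compat; auto; apply Rinv_0_lt_compat; auto. Qed.

Lemma disc_pos (y : R) : 0 < Bf y ^ 2 + 4 * (a / Tm) * s.
Proof. pose proof A_pos. nra. Qed.

Lemma X_pos (y : R) : 0 < Xf y.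
Proof.
  pose proof A_pos. pose proof (disc_pos y).
  pose proof (sqrt_sqrt _ (Rlt_le _ _ (disc_pos y))).
  pose proof (sqrt_pos (Bf y ^ 2 + 4 * (a / Tm) * s)).
  unfold Xf. unfold Rdiv at 1. apply Rmult_lt_0_compat.
  2: apply Rinv_0_lt_compat; lra.
  set (D := sqrt (Bf y ^ 2 + 4 * (a / Tm) * s)) in *.
  set (B := Bf y) in *.
  assert (B < D) by nra. lra.
Qed.

Lemma X_eq (y : R) : (a / Tm) * Xf y ^ 2 + Bf y * Xf y = s.
Proof.
  pose proof A_pos.
  pose proof (sqrt_sqrt _ (Rlt_le _ _ (disc_pos y))).
  unfold Xf.
  set (D := sqrt (Bf y ^ 2 + 4 * (a / Tm) * s)) in *.
  set (B := Bf y) in *. set (A := a / Tm) in *.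
  apply Rminus_diag_uniq.
  replace (A * ((- B + D) / (2 * A)) ^ 2 + B * ((- B + D) / (2 * A)) - s)
    with ((D * D - (B ^ 2 + 4 * A * s)) / (4 * A)) by (field; lra).
  rewrite H0. unfold Rdiv. ring.
Qed.

Lemma F_X (y : R) : 0 <= y -> Ff (Xf y) y = 0.
Proof.
  intros hy. pose proof (X_pos y). pose proof (X_eq y). pose proof (wpos y hy).
  unfold Ff. unfold Bf in *. set (X := Xf y) in *.
  apply Rminus_diag_uniq.
  replace (s / X - d + a - a * X / Tm - a * y / Tm - b * k * y / (1 + al * k * y) - 0)
    with ((s - (a / Tm * X ^ 2 + (d - a + a * y / Tm + b * k * y / (1 + al * k * y)) * X)) / X)
    by (field; lra).
  rewrite H0. unfold Rdiv. ring.
Qed.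

Lemma H_cont (y : R) : 0 <= y -> continuity_pt (fun y => - Gf (Xf y) y) y.
Proof.
  intros hy. apply continuity_pt_filterlim. apply (ex_derive_continuous (fun y => - Gf (Xf y) y)).
  pose proof A_pos. pose proof (disc_pos y).
  unfold Gf, Xf, Bf in *. auto_derive.
  pose proof (wpos y hy).
  repeat split; try lra.
Qed.

Lemma X0 : Xf 0 = Tm / (2 * a) * (a - d + sqrt ((a - d) ^ 2 + 4 * a * s / Tm)).
Proof.
  unfold Xf, Bf.
  replace ((d - a + a * 0 / Tm + b * k * 0 / (1 + al * k * 0)) ^ 2 + 4 * (a / Tm) * s)
    with ((a - d) ^ 2 + 4 * a * s / Tm) by (field; lra).
  replace (d - a + a * 0 / Tm + b * k * 0 / (1 + al * k * 0)) with (d - a) by (field; lra).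
  field. lra.
Qed.

Definition Mb := 1 + s / (a / Tm).

Lemma X_bound (y : R) : Tm <= y -> Xf y <= Mb.
Proof.
  intros hy. pose proof A_pos. pose proof (X_pos y). pose proof (X_eq y).
  assert (0 <= Bf y).
  { unfold Bf. assert (0 <= y) by lra.
    pose proof (g_mono 0 y (Rle_refl 0) H2).
    replace (b * k * 0 / (1 + al * k * 0)) with 0 in H3 by (field; lra).
    assert (a <= a * y / Tm).
    { apply Rmult_le_reg_r with Tm; auto. replace (a * y / Tm * Tm) with (a * y) by (field; lra). nra. }
    lra. }
  unfold Mb. set (X := Xf y) in *. set (A := a / Tm) in *. set (B := Bf y) in *.
  assert (A * X ^ 2 <= s) by nra.
  destruct (Rle_dec X 1). assert (0 < s / A) by (unfold Rdiv; apply Rmult_lt_0_compat; auto; apply Rinv_0_lt_compat; auto). lra.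
  assert (X <= s / A).
  { apply Rmult_le_reg_r with A; auto. replace (s / A * A) with s by (field; lra). nra. }
  lra.
Qed.

Definition y1 := Tm + Tm * (b * k * Mb + a) / a + 1.

Lemma H_neg : Gf (Xf y1) y1 < 0.
Proof.
  assert (hy : Tm <= y1).
  { unfold y1. assert (0 < Mb).
    { unfold Mb. pose proof A_pos. assert (0 < s / (a/Tm)) by (unfold Rdiv; apply Rmult_lt_0_compat; auto; apply Rinv_0_lt_compat; auto). lra. }
    assert (0 <= Tm * (b * k * Mb + a) / a).
    { unfold Rdiv. apply Rmult_le_pos. apply Rmult_le_pos. lra. assert (0 < b*k) by nra. nra. left; apply Rinv_0_lt_compat; auto. }
    lra. }
  pose proof (X_bound y1 hy). pose proof (X_pos y1).
  pose proof (wpos y1 ltac:(lra)).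
  unfold Gf. set (X := Xf y1) in *.
  assert (bk : 0 < b*k) by nra.
  assert (b * k * X / (1 + al * k * y1) <= b * k * X).
  { apply Rmult_le_reg_r with (1 + al * k * y1); auto.
    replace (b * k * X / (1 + al * k * y1) * (1 + al * k * y1)) with (b*k*X) by (field; lra).
    pose proof akpos. assert (0 <= al * k * y1) by (apply Rmult_le_pos; lra).
    assert (0 <= b * k * X * (al * k * y1)) by (apply Rmult_le_pos; [apply Rmult_le_pos|]; lra).
    lra. }
  assert (e : a * (1 - (X + y1) / Tm) = a - a * X / Tm - a * y1 / Tm) by (field; lra).
  assert (0 <= a * X / Tm).
  { unfold Rdiv. apply Rmult_le_pos. nra. left; apply Rinv_0_lt_compat; auto. }
  assert (ey : a * y1 / Tm = a + (b * k * Mb + a) + a / Tm) by (unfold y1; field; lra).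
  assert (0 < a / Tm) by apply A_pos.
  assert (b * k * X <= b * k * Mb) by nra.
  lra.
Qed.

Lemma exists_eq (T00 : R) : T00 = Tm / (2 * a) * (a - d + sqrt ((a - d) ^ 2 + 4 * a * s / Tm)) ->
  b * k * T00 + a * (1 - T00 / Tm) > mu ->
  exists z, 0 < z /\ Ff (Xf z) z = 0 /\ Gf (Xf z) z = 0.
Proof.
  intros hT hR.
  assert (h0 : - Gf (Xf 0) 0 < 0).
  { unfold Gf. rewrite X0, <- hT.
    replace (b * k * T00 / (1 + al * k * 0) + a * (1 - (T00 + 0) / Tm) - mu)
      with (b * k * T00 + a * (1 - T00 / Tm) - mu) by (field; lra). lra. }
  assert (hy1 : 0 < y1).
  { pose proof (X_bound y1). unfold y1 in *.
    assert (0 < Mb).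
    { unfold Mb. pose proof A_pos. assert (0 < s / (a/Tm)) by (unfold Rdiv; apply Rmult_lt_0_compat; auto; apply Rinv_0_lt_compat; auto). lra. }
    assert (0 <= Tm * (b * k * Mb + a) / a).
    { unfold Rdiv. apply Rmult_le_pos. apply Rmult_le_pos. lra. assert (0 < b*k) by nra. nra. left; apply Rinv_0_lt_compat; auto. }
    lra. }
  destruct (IVT_interv (fun y => - Gf (Xf y) y) 0 y1) as [z [hz1 hz2]].
  - intros t ht. apply H_cont. lra.
  - exact hy1.
  - exact h0.
  - pose proof H_neg. lra.
  - assert (z <> 0). { intro e. subst z. lra. }
    exists z. split. lra. split. apply F_X. lra. lra.
Qed.

End Aux.

Theorem mainTheorem2 (P : params) :
  params_ok P -> basicR0 P > 1 ->
  exists T2 I2 V2 : R,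
    (0 < T2 /\ 0 < I2 /\ 0 < V2 /\ is_equilibrium P T2 I2 V2) /\
    (forall T I V : R, 0 < T -> 0 < I -> 0 < V -> is_equilibrium P T I V ->
       T = T2 /\ I = I2 /\ V = V2).
Proof.
  intros [hs [hd [ha [hTm [hb [hal [hmu [hp [hc htau]]]]]]]]] hR.
  destruct P as [s d a Tm b al mu p c tau]; cbn [s_ d_ a_ Tmax_ b_ alpha_ mu_ p_ c_ tau_] in *.
  unfold basicR0, T0, is_equilibrium, fT, fI, fV in *; cbn [s_ d_ a_ Tmax_ b_ alpha_ mu_ p_ c_ tau_] in *.
  set (k := p / c).
  assert (hk : 0 < k) by (unfold k, Rdiv; apply Rmult_lt_0_compat; auto; apply Rinv_0_lt_compat; auto).
  set (T00 := Tm / (2 * a) * (a - d + sqrt ((a - d) ^ 2 + 4 * a * s / Tm))) in *.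
  assert (hR' : b * k * T00 + a * (1 - T00 / Tm) > mu).
  { assert (e : b * p * T00 / c = b * k * T00) by (unfold k; field; lra).
    rewrite e in hR.
    apply Rmult_gt_compat_l with (r := mu) in hR; auto.
    rewrite <- Rmult_assoc, Rinv_r in hR by lra. lra. }
  destruct (exists_eq s d a Tm b k al mu hs hd ha hTm hb hk hal hmu T00 eq_refl hR')
    as [z [hz [hF hG]]].
  pose proof (X_pos s d a Tm b k al hs ha hTm z) as hX.
  set (X := Xf s d a Tm b k al z) in *.
  assert (EQ : forall x y, 0 < x -> 0 < y ->
     (s - d * x + a * x * (1 - (x + y) / Tm) - b * x * (k * y) / (1 + al * (k * y))
        = x * Ff s d a Tm b k al x y) /\
     (b * x * (k * y) / (1 + al * (k * y)) + a * y * (1 - (x + y) / Tm) - mu * y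
        = y * Gf a Tm b k al mu x y)).
  { intros x y hx hy. pose proof (wpos k al hk hal y (Rlt_le _ _ hy)).
    unfold Ff, Gf. split; field; repeat split; lra. }
  exists X, z, (k * z). split.
  - destruct (EQ X z hX hz) as [E1 E2].
    split; auto. split; auto. split. apply Rmult_lt_0_compat; auto.
    split. rewrite E1, hF; ring. split. rewrite E2, hG; ring.
    unfold k; field; lra.
  - intros T I V hT hI hV [e1 [e2 e3]].
    assert (eV : V = k * I).
    { assert (cv : c * V = p * I) by lra. unfold k. apply Rmult_eq_reg_l with c; [|lra].
      rewrite cv. field. lra. }
    subst V. destruct (EQ T I hT hI) as [E1 E2].
    rewrite E1 in e1. rewrite E2 in e2.
    assert (F1 : Ff s d a Tm b k al T I = 0).
    { destruct (Rmult_integral _ _ e1); auto; lra. }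
    assert (G1 : Gf a Tm b k al mu T I = 0).
    { destruct (Rmult_integral _ _ e2); auto; lra. }
    destruct (uniq s d a Tm b k al mu hs ha hTm hb hk hal T I X z hT hI hX hz F1 G1 hF hG)
      as [-> ->].
    auto.
Qed.
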